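(* Let $K\subseteq R\,\mathbb{B}_1^n$, $R\in\mathbb{N}$, be a compact convex set and let $P=\{\mathbf{x}\in\mathbb{R}^n:\mathsf{A}\mathbf{x}\le\mathbf{b}\}$, $\mathsf{A}\in\mathbb{Z}^{m\times n}$, $\mathbf{b}\in\mathbb{Z}^m$, with $P\cap K=\emptyset$ (and all rows $\mathbf{a}_i$ of $\mathsf{A}$ nonzero). For each $i\in[m]$ let $(\mathbf{a}'_i,b'_i,k_i,\mathbf{a}_{i,1},b_{i,1},\gamma_{i,1},\dots,\mathbf{a}_{i,k_i},b_{i,k_i},\gamma_{i,k_i})$ be a valid substitution sequence of $\mathbf{a}_i\mathbf{x}\le b_i$ of precision $R$, $N:=10nR$, $M:=(10nR)^{n+2}$, and let $P'=\{\mathbf{x}\in\mathbb{R}^n:\mathsf{A}'\mathbf{x}\le\mathbf{b}'\}$ where $\mathsf{A}'$ has rows $\mathbf{a}'_1,\dots,\mathbf{a}'_m$ and $\mathbf{b}'=(b'_1,\dots,b'_m)$. Then there exists an ordered list $\mathcal{L}=(\mathbf{a}_{j_1,p_1},-\mathbf{a}_{j_1,p_1},\dots,\mathbf{a}_{j_l,p_l},-\mathbf{a}_{j_l,p_l})$ with $j_r\in[m]$ and $p_r\in[k_{j_r}-1]$ for $r\in[l]$, such that $\mathrm{CG}(K\cap P',\mathcal{L})=\emptyset$ and $|\mathcal{L}|=2l\le 2(n+1)$.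
   Context: $\mathbb{B}_1^n$ is the unit $\ell_1$ ball. Notation: $\mathsf{A}\mathbf{x}\le\mathbf{b}\Rightarrow_R\mathbf{c}\mathbf{x}\le d$ means $\{\mathbf{x}:\|\mathbf{x}\|_1\le R,\ \mathsf{A}\mathbf{x}\le\mathbf{b}\}\subseteq\{\mathbf{x}:\|\mathbf{x}\|_1\le R,\ \mathbf{c}\mathbf{x}\le d\}$ (similarly with $<$; systems may include equalities). A valid substitution sequence of an inequality $\mathbf{a}\mathbf{x}\le b$ ($\mathbf{a}\in\mathbb{Z}^n\setminus\{0\}$, $b\in\mathbb{Z}$) of precision $R,N,M\in\mathbb{N}$ is a list $(\mathbf{a}',b',k,\mathbf{a}_1,b_1,\gamma_1,\dots,\mathbf{a}_k,b_k,\gamma_k)$ with $k\in[n+1]$, $\mathbf{a}',\mathbf{a}_i\in\mathbb{Z}^n$, $b',b_i\in\mathbb{Z}$, $\gamma_i\in\mathbb{R}_+$, $\gamma_k=0$, such that: (1) $\|\mathbf{a}'\|_\infty\le N^nM^{n+1}$, $|b'|\le RN^nM^{n+1}$, and $\|\mathbf{a}_i\|_\infty\le 11nN^n$, $|b_i|\le R\|\mathbf{a}_i\|_\infty+1$ for all $i\in[k]$; (2) for each $l\in[k-1]$: $\mathbf{a}'\mathbf{x}\le b',\ \mathbf{a}_i\mathbf{x}=b_i\ \forall i\in[l-1]\ \Rightarrow_R\ \mathbf{a}_l\mathbf{x}<b_l+1$; (3) for each $l\in[k]$: $\mathbf{a}'\mathbf{x}\le b',\ \mathbf{a}_i\mathbf{x}=b_i\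 \forall i\in[l-1]\ \Rightarrow_R\ \mathbf{a}\mathbf{x}\le b+\gamma_l$; (4) for each $l\in[k-1]$: $\mathbf{a}_l\mathbf{x}\le b_l-1,\ \mathbf{a}_i\mathbf{x}=b_i\ \forall i\in[l-1]\ \Rightarrow_R\ \mathbf{a}\mathbf{x}\le b-n\gamma_l$. Support function $h_K(\mathbf{a})=\sup_{\mathbf{x}\in K}\mathbf{a}\mathbf{x}$ with $h_\emptyset\equiv-\infty$; for $\mathbf{a}\in\mathbb{Z}^n$, $\mathrm{CG}(K,\mathbf{a}):=K\cap\{\mathbf{x}:\mathbf{a}\mathbf{x}\le\lfloor h_K(\mathbf{a})\rfloor\}$; for a list, cuts are applied one by one from left to right: $\mathrm{CG}(K,(\mathbf{a}_1,\dots,\mathbf{a}_k)):=\mathrm{CG}(\mathrm{CG}(K,\mathbf{a}_1),(\mathbf{a}_2,\dots,\mathbf{a}_k))$, $\mathrm{CG}(K,\emptyset)=K$. *)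

(* Defs.v *)
From HB Require Import structures.
From mathcomp Require Import all_boot all_order all_algebra.
From mathcomp Require Import all_classical all_reals all_analysis.
Set Implicit Arguments. Unset Strict Implicit. Unset Printing Implicit Defensive.
Import Order.TTheory GRing.Theory Num.Theory.
Import numFieldNormedType.Exports.
Local Open Scope classical_set_scope.
Local Open Scope ring_scope.

Section Defs.
Variables (R : realType) (n : nat).

Definition dotz (a : 'rV[int]_n) (x : 'rV[R]_n) : R :=
  \sum_(i < n) (a ord0 i)%:~R * x ord0 i.

Definition norm1 (x : 'rV[R]_n) : R := \sum_(i < n) `|x ord0 i|.

Definition norminfz (a : 'rV[int]_n) : int := \big[Num.max/0]_(i < n) `|a ord0 i|.

Definition impl_R (Rb : nat) (S T : 'rV[R]_n -> Prop) : Prop :=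
  forall x, norm1 x <= Rb%:R -> S x -> T x.

(* support function, valued in extended reals (h_empty = -oo) *)
Definition supp_fun (K : set 'rV[R]_n) (a : 'rV[int]_n) : \bar R :=
  ereal_sup [set (dotz a x)%:E | x in K].

(* Chvatal-Gomory closure by a single cut.  When h_K(a) = -oo, K is empty and
   the result is K = empty; when h_K(a) = +oo (never the case for the
   compact sets considered) we leave K unchanged. *)
Definition CG1 (K : set 'rV[R]_n) (a : 'rV[int]_n) : set 'rV[R]_n :=
  match supp_fun K a with
  | r%:E => K `&` [set x | dotz a x <= (Num.floor r)%:~R]
  | -oo%E => set0
  | +oo%E => K
  end.

Fixpoint CG (K : set 'rV[R]_n) (L : seq 'rV[int]_n) : set 'rV[R]_n :=
  match L with
  | [::] => K
  | a :: L' => CG (CG1 K a) L'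
  end.

(* Data of a substitution sequence (a', b', k, a_1, b_1, g_1, ..., a_k, b_k, g_k);
   k is the length of [steps]; steps are indexed from 0. *)
Record subst_seq := SubstSeq {
  ss_a' : 'rV[int]_n;
  ss_b' : int;
  ss_steps : seq ('rV[int]_n * int * R) }.

Definition ss_k (s : subst_seq) : nat := size (ss_steps s).
Definition ss_a (s : subst_seq) (i : nat) : 'rV[int]_n :=
  (nth (0, 0, 0) (ss_steps s) i).1.1.
Definition ss_b (s : subst_seq) (i : nat) : int :=
  (nth (0, 0, 0) (ss_steps s) i).1.2.
Definition ss_g (s : subst_seq) (i : nat) : R :=
  (nth (0, 0, 0) (ss_steps s) i).2.

(* hypothesis  a'x <= b', a_i x = b_i for all i < l  (0-based; paper: i in [l-1]) *)
Definition ss_hyp (s : subst_seq) (l : nat) (x : 'rV[R]_n) : Prop :=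
  dotz (ss_a' s) x <= (ss_b' s)%:~R /\
  forall i, (i < l)%N -> dotz (ss_a s i) x = (ss_b s i)%:~R.

Definition valid_subst_seq (a : 'rV[int]_n) (b : int) (Rb N M : nat)
    (s : subst_seq) : Prop :=
  let k := ss_k s in
  [/\ (1 <= k <= n.+1)%N /\ (forall i, (i < k)%N -> 0 <= ss_g s i) /\
        ss_g s k.-1 = 0,
      (* (1) *)
      (norminfz (ss_a' s) <= (N ^ n * M ^ n.+1)%N%:Z /\
       `|ss_b' s| <= (Rb * N ^ n * M ^ n.+1)%N%:Z /\
       forall i, (i < k)%N ->
         norminfz (ss_a s i) <= (11 * n * N ^ n)%N%:Z /\
         `|ss_b s i| <= Rb%:Z * norminfz (ss_a s i) + 1),
      (* (2) *)
      (forall l, (l < k.-1)%N ->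
        impl_R Rb (ss_hyp s l)
          (fun x => dotz (ss_a s l) x < (ss_b s l + 1)%:~R)),
      (* (3) *)
      (forall l, (l < k)%N ->
        impl_R Rb (ss_hyp s l)
          (fun x => dotz a x <= b%:~R + ss_g s l)) &
      (* (4) *)
      (forall l, (l < k.-1)%N ->
        impl_R Rb
          (fun x => dotz (ss_a s l) x <= (ss_b s l - 1)%:~R /\
                    forall i, (i < l)%N -> dotz (ss_a s i) x = (ss_b s i)%:~R)
          (fun x => dotz a x <= b%:~R - n%:R * ss_g s l))].

End Defs.

(* Main.v *)
Require Import Defs.
From HB Require Import structures.
From mathcomp Require Import all_boot all_order all_algebra.
From mathcomp Require Import all_classical all_reals all_analysis.
From mathcomp Require Import zify ring lra.
Set Implicit Arguments. Unset Strict Implicit. Unset Printing Implicit Defensive.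
Import Order.TTheory GRing.Theory Num.Theory.
Import numFieldNormedType.Exports.
Local Open Scope classical_set_scope.
Local Open Scope ring_scope.

Section H.
Variables (R : realType) (n : nat).
Local Notation V := 'rV[R]_n.
Implicit Types a : 'rV[int]_n.

Definition cvx (S : set V) := forall x y (t : R), S x -> S y -> 0 <= t -> t <= 1 ->
  S (t *: x + (1 - t) *: y).

Lemma cvx_of_convex (S : set V) : convex_set S -> cvx S.
Proof.
move=> cS x y t Sx Sy t0 t1.
have := cS x y (Itv01 t0 t1) (mem_set Sx) (mem_set Sy).
by rewrite inE.
Qed.

Lemma dotzD a (x y : V) : dotz a (x + y) = dotz a x + dotz a y.
Proof. by rewrite /dotz -big_split /=; apply: eq_bigr => i _; rewrite mxE mulrDr. Qed.
Lemma dotzZ a t (x : V) : dotz a (t *: x) = t * dotz a x.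
Proof. by rewrite /dotz mulr_sumr; apply: eq_bigr => i _; rewrite mxE mulrCA. Qed.
Lemma dotz0 a : dotz a (0 : V) = 0.
Proof. by rewrite /dotz big1 // => i _; rewrite mxE mulr0. Qed.
Lemma dotzN a (x : V) : dotz (- a) x = - dotz a x.
Proof. by rewrite /dotz -sumrN; apply: eq_bigr => i _; rewrite mxE mulrNz mulNr. Qed.
Lemma dotz_sum I (s : seq I) (F : I -> V) (a : 'rV[int]_n) :
  dotz a (\sum_(i <- s) F i) = \sum_(i <- s) dotz a (F i).
Proof.
elim: s => [|i s IH]; first by rewrite !big_nil dotz0.
by rewrite !big_cons dotzD IH.
Qed.

Lemma dotz_cont a : continuous (@dotz R n a).
Proof.
move=> x; rewrite /dotz.
elim: (index_enum _) => [|i s IH].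
  rewrite (_ : (fun x0 : V => \sum_(i <- [::] | true) _) = fun _ => 0).
    exact: cst_continuous.
  by apply: funext => y; rewrite big_nil.
rewrite (_ : (fun x0 : V => _) = (fun y : V => (a ord0 i)%:~R * y ord0 i) +
   (fun y : V => \sum_(j <- s) (a ord0 j)%:~R * y ord0 j)); last first.
  by apply: funext => y; rewrite big_cons.
apply: continuousD => //.
have -> : (fun y : V => (a ord0 i)%:~R * y ord0 i) =
  (fun _ : V => (a ord0 i)%:~R : R) \* (fun y : V => y ord0 i) by [].
apply: continuousM; first exact: cst_continuous.
exact: coord_continuous.
Qed.

Lemma closed_half a (r : R) : closed [set x : V | dotz a x <= r].
Proof.
rewrite (_ : [set x | _] = dotz a @^-1` [set y | y <= r]) //.
by move: (dotz_cont (a:=a)) => /continuous_closedP; apply; exact: closed_le.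
Qed.

Lemma cvx_half a (r : R) : cvx [set x : V | dotz a x <= r].
Proof.
move=> x y t /= hx hy t0 t1; rewrite dotzD !dotzZ.
have -> : r = t * r + (1 - t) * r by rewrite mulrBl mul1r addrC subrK.
by rewrite lerD // ler_wpM2l // subr_ge0.
Qed.

Lemma cvxI (A B : set V) : cvx A -> cvx B -> cvx (A `&` B).
Proof. by move=> cA cB x y t [? ?] [? ?] t0 t1; split; [apply: cA|apply: cB]. Qed.

Lemma CG1_cases (C : set V) a : CG1 C a = C \/ CG1 C a = set0 \/
   exists r : R, CG1 C a = C `&` [set x | dotz a x <= r].
Proof.
rewrite /CG1; case: (supp_fun C a) => [r| |]; last by right; left.
- by right; right; exists (Num.floor r)%:~R.
- by left.
Qed.

Lemma CG1_sub (C : set V) a : CG1 C a `<=` C.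
Proof. by case: (CG1_cases C a) => [->|[->|[r ->]]] // x []. Qed.

Lemma CG1_compact (C : set V) a : compact C -> compact (CG1 C a).
Proof.
move=> cC; case: (CG1_cases C a) => [->|[->|[r ->]]] //.
  exact: compact0.
by apply: compact_closedI => //; exact: closed_half.
Qed.

Lemma CG1_cvx (C : set V) a : cvx C -> cvx (CG1 C a).
Proof.
move=> cC; case: (CG1_cases C a) => [->|[->|[r ->]]] //.
by apply: cvxI => //; exact: cvx_half.
Qed.

Lemma CG1_max (C : set V) a (x0 : V) : C x0 -> (forall x, C x -> dotz a x <= dotz a x0) ->
  CG1 C a = C `&` [set x | dotz a x <= (Num.floor (dotz a x0))%:~R].
Proof.
move=> Cx0 mx; rewrite /CG1.
have -> : supp_fun C a = (dotz a x0)%:E.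
  apply/eqP; rewrite eq_le; apply/andP; split.
    by apply: ge_ereal_sup => _ [x Cx <-]; rewrite lee_fin mx.
  by apply: ereal_sup_ubound; exists x0.
by [].
Qed.

Lemma CG1_set0 a : CG1 set0 a = (set0 : set V).
Proof. by rewrite /CG1 /supp_fun image_set0 ereal_sup0. Qed.

Lemma CG_set0 L : CG set0 L = (set0 : set V).
Proof. by elim: L => //= a L IH; rewrite CG1_set0. Qed.

Lemma compact_max (C : set V) a : C !=set0 -> compact C ->
  exists2 x0, C x0 & forall x, C x -> dotz a x <= dotz a x0.
Proof.
move=> C0 cC; have [x0 /set_mem Cx0 H] := compact_EVT_max C0 cC
   (continuous_subspaceT (dotz_cont (a:=a))).
by exists x0 => // x Cx; apply: H; exact: mem_set.
Qed.

End H.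

Section H2.
Variables (R : realType) (n : nat).
Local Notation V := 'rV[R]_n.

Lemma cvx_comb (S : set V) : cvx S -> forall p (w : 'I_p -> R) (x : 'I_p -> V),
  (forall i, 0 <= w i) -> \sum_i w i = 1 -> (forall i, 0 < w i -> S (x i)) ->
  S (\sum_i w i *: x i).
Proof.
move=> cS; elim=> [|p IH] w x w0 w1 wS.
  by move: w1; rewrite big_ord0 => /eqP; rewrite eq_sym oner_eq0.
rewrite big_ord_recl.
move: w1; rewrite big_ord_recl => w1.
set t := w ord0 in w1 *.
have [t0|tn0] := eqVneq t 0.
  rewrite t0 scale0r add0r; apply: IH => //.
    by move: w1; rewrite t0 add0r.
  by move=> i /wS.
have tpos : 0 < t by rewrite lt_neqAle eq_sym tn0 w0.
have [t1|tn1] := eqVneq t 1.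
  have rest0 : \sum_(i < p) w (lift ord0 i) = 0.
    by apply: (addrI t); rewrite addr0 w1 t1.
  have /psumr_eq0P H0 := rest0.
  rewrite big1 ?addr0; last first.
    by move=> i _; rewrite H0 ?scale0r // => j _; exact: w0.
  by rewrite t1 scale1r; apply: wS; rewrite -/t t1 ltr01.
set s := \sum_(i < p) w (lift ord0 i) in w1.
have sE : s = 1 - t by rewrite -w1 addrAC subrr add0r.
have t1' : t < 1.
  have : t <= 1 by rewrite -w1 lerDl sumr_ge0.
  by rewrite le_eqVlt (negPf tn1).
have spos : 0 < s by rewrite sE subr_gt0.
have inner : S (\sum_(i < p) (w (lift ord0 i) / s) *: x (lift ord0 i)).
  apply: IH.
  - by move=> i; rewrite divr_ge0 // ltW.
  - by rewrite -mulr_suml -/s divff // gt_eqF.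
  - by move=> i hi; apply: wS; move: hi; rewrite pmulr_lgt0 // invr_gt0.
have := cS _ _ t (wS _ tpos) inner (ltW tpos) (ltW t1').
congr S; congr (_ + _).
rewrite scaler_sumr; apply: eq_bigr => i _; rewrite scalerA -sE.
by rewrite mulrCA divff ?mulr1 // gt_eqF.
Qed.

Lemma dep_exists p (x : 'I_p -> V) : (n.+1 < p)%N ->
  exists u : 'I_p -> R, (exists i, u i != 0) /\ \sum_i u i = 0 /\
    \sum_i u i *: x i = 0.
Proof.
move=> hp.
pose X : 'M[R]_(p, n) := \matrix_(i, j) x i ord0 j.
pose M : 'M[R]_(p, n + 1) := row_mx X (const_mx 1).
have nf : ~~ row_free M.
  rewrite /row_free; apply/negP => /eqP hr.
  have := rank_leq_col M; rewrite hr addn1 => hle.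
  by move: (leq_trans hp hle); rewrite ltnn.
move: nf; rewrite -kermx_eq0 => /rowV0Pn [v /sub_kermxP vM /rV0Pn [i0 vi0]].
exists (fun i => v ord0 i); split; first by exists i0.
move: vM; rewrite mul_mx_row -row_mx0 => /eq_row_mx [vX v1].
split.
  have h := congr1 (fun A : 'M[R]_(1, 1) => A ord0 ord0) v1; rewrite /= !mxE in h.
  rewrite -[RHS]h; apply: eq_bigr => i _; rewrite mxE mulr1 //.
apply/rowP => j; have h := congr1 (fun A : 'M[R]_(1, n) => A ord0 j) vX.
rewrite /= !mxE in h; rewrite summxE [RHS]mxE -[RHS]h; apply: eq_bigr => i _.
by rewrite !mxE.
Qed.

End H2.

Section H3.
Variables (R : realType) (n : nat) (I : eqType) (F : I -> set 'rV[R]_n).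
Hypothesis cF : forall j, cvx (F j).

Definition HH k := forall s : seq I, (size s <= k)%N ->
  exists x, forall j, j \in s -> F j x.

Lemma helly_step k : (n.+1 <= k)%N -> HH k -> HH k.+1.
Proof.
move=> nk Hk s; rewrite leq_eqVlt => /orP [/eqP hs|]; last by rewrite ltnS; exact: Hk.
case: s hs => [//|j0 s'] hs; set s := j0 :: s' in hs *.
set p := k.+1 in hs.
pose sr (r : 'I_p) := [seq nth j0 s (val i) | i <- rem r (enum 'I_p)].
have Hr : forall r : 'I_p, exists x, forall j, j \in sr r -> F j x.
  move=> r; apply: Hk; rewrite size_map size_rem ?mem_enum //.
  by rewrite size_enum_ord.
have [f fP] := choice Hr.
have fP' : forall (r i : 'I_p), i != r -> F (nth j0 s i) (f r).
  move=> r i ir; apply: fP; apply/mapP; exists i => //.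
  by rewrite (mem_rem_uniq _ (enum_uniq _)) inE ir mem_enum.
have [u [[i0 ui0] [su sux]]] := dep_exists f nk.
pose P i := if 0 <= u i then u i else 0.
pose N i := if 0 <= u i then 0 else - u i.
have P0 i : 0 <= P i by rewrite /P; case: ifP.
have N0 i : 0 <= N i.
  by rewrite /N; case: ifP => // /negbT; rewrite -ltNge oppr_ge0 => /ltW.
have uPN i : u i = P i - N i.
  by rewrite /P /N; case: ifP; rewrite ?subr0 ?sub0r ?opprK.
set sg := \sum_i P i.
have sPN : \sum_i N i = sg.
  have h : \sum_i u i = sg - \sum_i N i.
    by rewrite -sumrB; apply: eq_bigr => i _; rewrite uPN.
  by move: h; rewrite su => /esym/eqP; rewrite subr_eq0 => /eqP.
have sPNx : \sum_i N i *: f i = \sum_i P i *: f i.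
  have h : \sum_i u i *: f i = \sum_i P i *: f i - \sum_i N i *: f i.
    by rewrite -sumrB; apply: eq_bigr => i _; rewrite uPN scalerBl.
  by move: h; rewrite sux => /esym/eqP; rewrite subr_eq0 => /eqP.
have sgpos : 0 < sg.
  rewrite lt_neqAle sumr_ge0 // andbT; apply/negP => /eqP /esym sg0.
  have Pz : forall i, P i = 0 by move=> i; apply: (psumr_eq0P _ sg0) => // j _.
  have Nz : forall i, N i = 0.
    by move=> i; apply: (psumr_eq0P _ (etrans sPN sg0)) => // j _.
  by move: ui0; rewrite uPN Pz Nz subrr eqxx.
pose z := \sum_i (P i / sg) *: f i.
have zN : z = \sum_i (N i / sg) *: f i.
  rewrite /z.
  have e (W : 'I_p -> R) : \sum_i (W i / sg) *: f i = sg^-1 *: \sum_i W i *: f i.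
    rewrite scaler_sumr; apply: eq_bigr => i _; by rewrite scalerA mulrC.
  by rewrite !e sPNx.
exists z => j js.
have [r0 ->] : exists r0 : 'I_p, j = nth j0 s r0.
  have hj : (index j s < p)%N by rewrite -hs index_mem.
  by exists (Ordinal hj); rewrite /= nth_index.
have sum1 (W : 'I_p -> R) : \sum_i W i = sg -> \sum_i W i / sg = 1.
  by move=> h; rewrite -mulr_suml h divff // gt_eqF.
case: (leP (u r0) 0) => hu.
  apply: cvx_comb => //.
  - by move=> i; rewrite divr_ge0 // ltW.
  - exact: sum1.
  move=> i hi; apply: fP'; apply/eqP => ir; move: hi; rewrite -ir.
  rewrite pmulr_lgt0 ?invr_gt0 // /P; case: ifP => // h0; [by move=> h1; move: hu; rewrite leNgt h1|by rewrite ltxx].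
rewrite zN; apply: cvx_comb => //.
- by move=> i; rewrite divr_ge0 // ltW.
- exact: sum1.
move=> i hi; apply: fP'; apply/eqP => ir; move: hi; rewrite -ir.
by rewrite pmulr_lgt0 ?invr_gt0 // /N ltW //= ltxx.
Qed.

Lemma helly : HH n.+1 -> forall s : seq I, exists x, forall j, j \in s -> F j x.
Proof.
move=> H s.
have Hk : forall d, HH (n.+1 + d).
  elim=> [|d IH]; first by rewrite addn0.
  by rewrite addnS; apply: helly_step => //; rewrite leq_addr.
apply: (Hk (size s)); rewrite addnC leq_addr //.
Qed.

End H3.

Section Main.
Variables (R : realType) (n m Rb : nat) (K : set 'rV[R]_n)
  (A : 'I_m -> 'rV[int]_n) (b : 'I_m -> int) (S : 'I_m -> subst_seq R n).
Local Notation V := 'rV[R]_n.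
Hypothesis Kb : K `<=` [set x | norm1 x <= Rb%:R].
Hypothesis hP : [set x | forall i, dotz (A i) x <= (b i)%:~R] `&` K = set0.
Hypothesis hv : forall i, valid_subst_seq (A i) (b i) Rb (10 * n * Rb)
                             ((10 * n * Rb) ^ n.+2) (S i).
Let P' := [set x : V | forall i, dotz (ss_a' (S i)) x <= (ss_b' (S i))%:~R].

Definition good (C : set V) := [/\ compact C, cvx C & C `<=` K `&` P'].
Definition eqs j l (x : V) := forall i, (i < l)%N ->
  dotz (ss_a (S j) i) x = (ss_b (S j) i)%:~R.
Local Notation kk j := (ss_k (S j)).

Lemma k_ge1 j : (1 <= kk j)%N.
Proof. by case: (hv j) => [[/andP[]]]. Qed.

Lemma stage (C : set V) j : exists l, [/\ (l < kk j)%N, (forall x, C x -> eqs j l x) &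
  ((l < (kk j).-1)%N -> exists q, C q /\
     dotz (ss_a (S j) l) q <> (ss_b (S j) l)%:~R)].
Proof.
have k1 := k_ge1 j.
suff gen : forall d l, (l + d = (kk j).-1)%N -> (forall x, C x -> eqs j l x) ->
   exists l', [/\ (l' < kk j)%N, (forall x, C x -> eqs j l' x) &
  ((l' < (kk j).-1)%N -> exists q, C q /\
     dotz (ss_a (S j) l') q <> (ss_b (S j) l')%:~R)].
  by apply: (gen (kk j).-1 0%N) => // x _ i.
elim=> [|d IH] l hl hC.
  exists l; split => //; first by rewrite addn0 in hl; rewrite hl prednK.
  by rewrite addn0 in hl; rewrite hl ltnn.
have [H|H] := pselect (forall x, C x -> dotz (ss_a (S j) l) x = (ss_b (S j) l)%:~R).
  apply: (IH l.+1); first by rewrite addSnnS.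
  move=> x Cx i; rewrite ltnS leq_eqVlt => /orP [/eqP ->|il]; first exact: H.
  exact: hC.
exists l; split => //.
  by move: hl k1; set K0 := kk j; lia.
move=> _; move/existsNP: H => [q /not_implyP [Cq hq]]; by exists q.
Qed.

Section Facts.
Variables (C : set V) (j : 'I_m) (l : nat).
Hypotheses (gC : good C) (hl : (l < kk j)%N) (heq : forall x, C x -> eqs j l x).

Lemma hyp_C x : C x -> ss_hyp (S j) l x.
Proof.
move=> Cx; case: gC => _ _ /(_ x Cx) [_ hx]; split; first exact: hx.
exact: heq.
Qed.

Lemma ballC x : C x -> norm1 x <= Rb%:R.
Proof. by move=> Cx; case: gC => _ _ /(_ x Cx) [/Kb]. Qed.

Lemma F2 x : C x -> dotz (A j) x <= (b j)%:~R + ss_g (S j) l.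
Proof.
move=> Cx; case: (hv j) => _ _ _ h3 _; apply: (h3 l hl) => //.
  exact: ballC.
exact: hyp_C.
Qed.

Lemma F3 x : (l < (kk j).-1)%N -> C x ->
  dotz (ss_a (S j) l) x < (ss_b (S j) l + 1)%:~R.
Proof.
move=> hl' Cx; case: (hv j) => _ _ h2 _ _; apply: (h2 l hl') => //.
  exact: ballC.
exact: hyp_C.
Qed.

Lemma F4 y : (l < (kk j).-1)%N -> C y ->
  dotz (ss_a (S j) l) y <= (ss_b (S j) l - 1)%:~R ->
  dotz (A j) y <= (b j)%:~R - n%:R * ss_g (S j) l.
Proof.
move=> hl' Cy hy; case: (hv j) => _ _ _ _ h4; apply: (h4 l hl') => //.
  exact: ballC.
by split => //; exact: heq.
Qed.

Lemma F5 : ~ (l < (kk j).-1)%N -> ss_g (S j) l = 0.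
Proof.
move=> h; have -> : l = (kk j).-1.
  apply/eqP; rewrite eqn_leq -ltnS prednK ?k_ge1 // hl /=.
  by rewrite leqNgt; apply/negP.
by case: (hv j) => [[_ [_ ->]]].
Qed.

Lemma g_ge0 : 0 <= ss_g (S j) l.
Proof. by case: (hv j) => [[_ [hg _]]] _ _ _ _; exact: hg. Qed.

End Facts.


Lemma exists_good (C : set V) : good C -> C !=set0 -> exists j l,
  [/\ (l < (kk j).-1)%N, (forall x, C x -> eqs j l x),
   (exists q, C q /\ dotz (ss_a (S j) l) q <> (ss_b (S j) l)%:~R) &
   (forall x, C x -> (ss_b (S j) l - 1)%:~R < dotz (ss_a (S j) l) x)].
Proof.
move=> gC [x0 Cx0]; apply: contrapT => Hn.
have [lf lfP] := choice (fun j => stage C j).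
have hY : forall j, exists y, C y /\ ((lf j < (kk j).-1)%N ->
    dotz (A j) y <= (b j)%:~R - n%:R * ss_g (S j) (lf j)).
  move=> j; have [hk heq hq] := lfP j.
  case: (boolP (lf j < (kk j).-1)%N) => h; last by exists x0.
  have : ~ (forall x, C x -> (ss_b (S j) (lf j) - 1)%:~R < dotz (ss_a (S j) (lf j)) x).
    by move=> H; apply: Hn; exists j, (lf j); split => //; exact: hq.
  move/existsNP => [y /not_implyP [Cy hy]]; exists y; split => // _.
  apply: (F4 gC heq h Cy); rewrite leNgt; exact/negP.
have [Y YP] := choice hY.
pose F j := C `&` [set x | dotz (A j) x <= (b j)%:~R].
have cF : forall j, cvx (F j).
  by move=> j; apply: cvxI; [case: gC|exact: cvx_half].
have HN : HH F n.+1.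
  move=> s hs.
  set s' := [seq j <- s | (lf j < (kk j).-1)%N].
  have Fin : forall j x, C x -> ~~ (lf j < (kk j).-1)%N -> F j x.
    move=> j x Cx hj; split => //; have [hk heq _] := lfP j.
    by have := F2 gC hk heq Cx; rewrite (F5 hk) ?addr0 //; apply/negP.
  case: (eqVneq s' [::]) => hs'.
    exists x0 => j js; apply: Fin => //; apply/negP => hj.
    have : j \in s' by rewrite mem_filter hj js.
    by rewrite hs' in_nil.
  set sz := size s'.
  have szpos : (0 < sz)%N by rewrite lt0n size_eq0.
  have szn : (sz <= n.+1)%N.
    by rewrite /sz size_filter (leq_trans (count_size _ _) hs).
  have [j0 _] : exists j0 : 'I_m, True.
    by move: hs'; case: (s') => [|j0 t] //; exists j0.
  pose x := \sum_(r < sz) (sz%:R^-1 : R) *: Y (nth j0 s' r).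
  have Cx : C x.
    apply: cvx_comb; first by case: gC.
    - by move=> r; rewrite invr_ge0.
    - by rewrite sumr_const card_ord -[_ *+ sz]mulr_natr mulVf // pnatr_eq0 -lt0n.
    - by move=> r _; have [] := YP (nth j0 s' r).
  exists x => j js.
  case: (boolP (lf j < (kk j).-1)%N) => hj; last exact: Fin.
  split => //.
  have js' : j \in s' by rewrite mem_filter hj js.
  have [hk heq _] := lfP j.
  set g := ss_g (S j) (lf j).
  have g0 : 0 <= g by apply: g_ge0.
  have hr0 : (index j s' < sz)%N by rewrite index_mem.
  pose r0 : 'I_sz := Ordinal hr0.
  have Tb : forall r : 'I_sz, dotz (A j) (Y (nth j0 s' r)) <= (b j)%:~R + g.
    by move=> r; apply: (F2 gC hk heq); have [] := YP (nth j0 s' r).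
  have Tr0 : dotz (A j) (Y (nth j0 s' r0)) <= (b j)%:~R - n%:R * g.
    by rewrite /= nth_index //; have [_] := YP j; apply.
  rewrite /= /x dotz_sum.
  under eq_bigr do rewrite dotzZ.
  rewrite -mulr_sumr.
  have hsum : \sum_(r < sz) dotz (A j) (Y (nth j0 s' r)) <= sz%:R * (b j)%:~R.
    rewrite (bigD1 r0) //=.
    have h2 : \sum_(r < sz | r != r0) dotz (A j) (Y (nth j0 s' r)) <=
              (sz.-1)%:R * ((b j)%:~R + g).
      apply: le_trans (ler_sum _ (fun r _ => Tb r)) _.
      by rewrite sumr_const cardC1 card_ord mulr_natl.
    have hn : (sz.-1)%:R * g <= n%:R * g.
      by rewrite ler_wpM2r // ler_nat -ltnS prednK.
    have hs1 : sz%:R = (sz.-1)%:R + 1 :> R by rewrite natr1 (prednK szpos).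
    rewrite hs1; nra.
  apply: le_trans (ler_wpM2l _ hsum) _; first by rewrite invr_ge0.
  by rewrite mulrA mulVf ?mul1r // pnatr_eq0 -lt0n.
have [z hz] := helly (F := F) cF HN (enum 'I_m).
have [[j0 _]|nj] := pselect (exists j : 'I_m, True).
  have : ([set x | forall i, dotz (A i) x <= (b i)%:~R] `&` K) z.
    split; first by move=> i; have [] := hz i (mem_enum _ _).
    have [Cz _] := hz j0 (mem_enum _ _).
    by case: gC => _ _ /(_ z Cz) [].
  by rewrite hP.
have : ([set x | forall i, dotz (A i) x <= (b i)%:~R] `&` K) x0.
  split; first by move=> i; case: nj; exists i.
  by case: gC => _ _ /(_ x0 Cx0) [].
by rewrite hP.
Qed.

Lemma cut (C : set V) (c : 'rV[int]_n) (be : int) : good C ->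
  (exists q, C q) ->
  (forall x, C x -> (be - 1)%:~R < dotz c x) ->
  (forall x, C x -> dotz c x < (be + 1)%:~R) ->
  good (CG C [:: c; - c]) /\
  (forall y, CG C [:: c; - c] y -> C y /\ dotz c y = be%:~R).
Proof.
move=> gC [q Cq] hlo hhi.
have e : CG C [:: c; - c] = CG1 (CG1 C c) (- c) by [].
rewrite e; case: gC => cC vC sC.
split.
  split; [by do 2 apply: CG1_compact|by do 2 apply: CG1_cvx|].
  by move=> y /CG1_sub /CG1_sub /sC.
have [x0 Cx0 mx0] := compact_max c (ex_intro _ q Cq) cC.
have E1 := CG1_max Cx0 mx0.
have hz1 : (Num.floor (dotz c x0))%:~R <= be%:~R :> R.
  by rewrite ler_int -ltzD1 floor_lt_int hhi.
have [C1ne|C1e] := pselect (CG1 C c !=set0); last first.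
  have -> : CG1 C c = set0.
    by apply/seteqP; split => // y Cy; apply: C1e; exists y.
  by rewrite CG1_set0.
have [x1 C1x1 mx1] := compact_max (- c) C1ne (CG1_compact (a:=c) cC).
rewrite (CG1_max C1x1 mx1) => y [C1y hy].
have [Cy hy1] : C y /\ dotz c y <= (Num.floor (dotz c x0))%:~R.
  by move: C1y; rewrite E1.
split => //; apply/eqP; rewrite eq_le (le_trans hy1 hz1) /=.
have hz2 : (Num.floor (dotz (- c) x1))%:~R <= (- be)%:~R :> R.
  rewrite ler_int -ltzD1 floor_lt_int dotzN.
  have Cx1 : C x1 by move: C1x1; rewrite E1 => -[].
  have := hlo x1 Cx1; rewrite -ltrN2 => h; apply: lt_le_trans h _.
  by rewrite -intrN opprB addrC.
have := le_trans hy hz2; rewrite dotzN intrN lerN2 //.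
Qed.

Definition dv (v x : V) : R := (v *m x^T) ord0 ord0.
Definition invW (W : 'M[R]_n) (C : set V) := forall x y, C x -> C y ->
  forall v : V, (v <= W)%MS -> dv v (x - y) = 0.

Lemma dv_cR (c : 'rV[int]_n) x : dv (map_mx (fun z : int => z%:~R) c) x = dotz c x.
Proof. by rewrite /dv /dotz mxE; apply: eq_bigr => i _; rewrite !mxE. Qed.

Lemma dvB v x y : dv v (x - y) = dv v x - dv v y.
Proof. by rewrite /dv !mxE -sumrB; apply: eq_bigr => i _; rewrite !mxE mulrBr. Qed.

Lemma dvD v1 v2 z : dv (v1 + v2) z = dv v1 z + dv v2 z.
Proof. by rewrite /dv mulmxDl mxE. Qed.

Lemma dvM (u : 'M[R]_(1, 1)) v z : dv (u *m v) z = u ord0 ord0 * dv v z.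
Proof. by rewrite /dv -mulmxA mxE big_ord1. Qed.

Lemma CG_cat (C : set V) s1 s2 : CG C (s1 ++ s2) = CG (CG C s1) s2.
Proof. by elim: s1 C => //= a s1 IH C; rewrite IH. Qed.

Lemma step (C : set V) (W : 'M[R]_n) : good C -> invW W C -> C !=set0 ->
  exists j l, [/\ (l < (kk j).-1)%N,
    good (CG C [:: ss_a (S j) l; - ss_a (S j) l]) &
    (CG C [:: ss_a (S j) l; - ss_a (S j) l] = set0 \/
     exists W' : 'M[R]_n, invW W' (CG C [:: ss_a (S j) l; - ss_a (S j) l]) /\
     (\rank W < \rank W')%N)].
Proof.
move=> gC iC C0.
have [j [l [hl heq [q [Cq hq]] hlo]]] := exists_good gC C0.
have hl0 : (l < kk j)%N by move: hl; set K0 := kk j; lia.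
have hhi : forall x, C x -> dotz (ss_a (S j) l) x < (ss_b (S j) l + 1)%:~R.
  by move=> x Cx; exact: (F3 gC heq hl Cx).
have [gC2 sub2] := cut gC (ex_intro _ q Cq) hlo hhi.
exists j, l; split => //.
set c := ss_a (S j) l in hq hlo hhi gC2 sub2 *.
have [[p Cp]|h] := pselect (CG C [:: c; - c] !=set0); last first.
  by left; apply/seteqP; split => // y hy; apply: h; exists y.
right; set cR := map_mx (fun z : int => z%:~R : R) c.
have ncW : ~~ (cR <= W)%MS.
  apply/negP => hc; have [Cp' hp] := sub2 p Cp.
  have := iC p q Cp' Cq cR hc; rewrite dvB !dv_cR hp => /eqP.
  by rewrite subr_eq0 => /eqP h; apply: hq; rewrite -h.
exists (W + cR)%MS; split.
  move=> x y Cx Cy v /sub_addsmxP [u ->].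
  have [Cx' hx] := sub2 x Cx; have [Cy' hy] := sub2 y Cy.
  rewrite dvD dvM (iC x y Cx' Cy' _ (submxMl _ _)) dvB !dv_cR hx hy.
  by rewrite subrr mulr0 addr0.
have hlt : (W < W + cR)%MS.
  rewrite ltmxE addsmxSl /=; apply/negP => h; apply: (negP ncW).
  exact: submx_trans (addsmxSr W cR) h.
by move: hlt; rewrite ltmxErank => /andP [_].
Qed.

Definition flatL (L : seq ('I_m * nat)) :=
  flatten [seq [:: ss_a (S jp.1) jp.2; - ss_a (S jp.1) jp.2] | jp <- L].

Lemma main_ind f : forall (C : set V) (W : 'M[R]_n), good C -> invW W C ->
  (n - \rank W <= f)%N -> exists L : seq ('I_m * nat),
  [/\ all (fun jp => (jp.2 < (ss_k (S jp.1)).-1)%N) L,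
      CG C (flatL L) = set0 & (size L <= f.+1)%N].
Proof.
elim: f => [|f IH] C W gC iC hf.
  have [C0|C0] := pselect (C !=set0); last first.
    exists [::]; split => //=; apply/seteqP; split => // y hy; apply: C0; by exists y.
  have [j [l [hl gC2 [E|[W' [iW' hr]]]]]] := step gC iC C0.
    by exists [:: (j, l)]; split => //=; rewrite hl.
  have := rank_leq_col W'; move: hf hr; lia.
have [C0|C0] := pselect (C !=set0); last first.
  exists [::]; split => //=; apply/seteqP; split => // y hy; apply: C0; by exists y.
have [j [l [hl gC2 [E|[W' [iW' hr]]]]]] := step gC iC C0.
  by exists [:: (j, l)]; split => //=; rewrite hl.
have hf' : (n - \rank W' <= f)%N by have := rank_leq_col W'; move: hf hr; lia.
have [L [hall hCG hsz]] := IH _ _ gC2 iW' hf'.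
by exists ((j, l) :: L); split => //=; rewrite hl.
Qed.

End Main.

Unset Implicit Arguments.
Theorem theorem3p3 (R : realType) (n m Rb : nat)
  (K : set 'rV[R]_n) (A : 'I_m -> 'rV[int]_n) (b : 'I_m -> int)
  (S : 'I_m -> subst_seq R n) :
  compact K -> convex_set K ->
  K `<=` [set x | norm1 x <= Rb%:R] ->
  (forall i, A i != 0) ->
  [set x | forall i, dotz (A i) x <= (b i)%:~R] `&` K = set0 ->
  (forall i, valid_subst_seq (A i) (b i) Rb (10 * n * Rb)
                             ((10 * n * Rb) ^ n.+2) (S i)) ->
  let P' := [set x | forall i, dotz (ss_a' (S i)) x <= (ss_b' (S i))%:~R] in
  exists L : seq ('I_m * nat),
    [/\ all (fun jp => (jp.2 < (ss_k (S jp.1)).-1)%N) L,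
        CG (K `&` P')
           (flatten [seq [:: ss_a (S jp.1) jp.2; - ss_a (S jp.1) jp.2] | jp <- L])
          = set0 &
        (size L <= n.+1)%N].
Proof.
move=> cK vK Kb _ hP hv P'.
have cP' : closed P'.
  have -> : P' = \bigcap_(i in setT) [set x | dotz (ss_a' (S i)) x <= (ss_b' (S i))%:~R].
    apply/seteqP; split => x /= h; first by move=> i _; exact: h.
    by move=> i; apply: (h i).

  by apply: closed_bigI => i _; exact: closed_half.
have gC : good K S (K `&` P').
  split.
  - exact: compact_closedI.
  - apply: cvxI; first exact: cvx_of_convex.
    rewrite /cvx => x y t hx hy t0 t1 i.
    by apply: (cvx_half (a:=ss_a' (S i)) (r:=(ss_b' (S i))%:~R)) => //; [exact: hx|exact: hy].
  - by [].
have iC : invW (0 : 'M[R]_n) (K `&` P').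
  move=> x y _ _ v; rewrite submx0 => /eqP ->.
  by rewrite /dv mul0mx mxE.
have hf : (n - \rank (0%R : 'M[R]_n) <= n)%N by rewrite mxrank0 subn0.
exact: (main_ind Kb hP hv gC iC hf).
Qed.
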